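(* Every pairwise balanced lobster has a complete $\alpha$-labeling.
   Context: For a graph $G=(V,E)$ with $m$ edges, an $\alpha$-labeling with critical number $k$ is an injective $f:V\to\{0,\ldots,m\}$ with distinct edge labels $|f(u)-f(v)|$ such that every edge $uv$ satisfies $f(u)\le k<f(v)$ or $f(v)\le k<f(u)$; it is complete if $f$ is bijective. A lobster is a tree whose base (delete all degree-one vertices) is a caterpillar (a tree whose base is a path). A lobster $L$ is described by a spine, a path $(v_1,\ldots,v_r)$, and lobes $F_i$ at $v_i$ (pairwise vertex-disjoint trees meeting the spine only in $v_i$, $L$ being the union of spine and lobes), each lobe $F_i$ consisting of $v_i$, vertices adjacent to $v_i$, and further leaves attached to those vertices; a neighbour of $v_i$ in $F_i$ with no further leaves is a pendant vertex at $v_i$, and a neighbour $u$ of $v_i$ together with its $\ge1$ further leaves is a (non-pendant) branch. A two-spinal-vertex tree $G$ consisting of adjacent vertices $w_1,w_2$, where $w_1$ has $s_1\ge0$ pendant neighbours and non-pendant branches centered at $u_{11},\ldots,u_{1r}$ with $u_{1i}$ having $x_i\ge1$ leaves, and $w_2$ has $s_2\ge0$ pendant neighbours and non-pendant branches centered at $u_{21},\ldots,u_{2s}$ with $u_{2j}$ having $y_j\ge1$ leaves, is balanced if $r=s$ and (when $r>0$) for all $i=1,\ldots,r$: $x_i=y_{r-\frac{i-1}{2}}$, $y_i=x_{r-\frac{i-1}{2}}$ for odd $i$, and $x_i=x_{i/2}$, $y_i=y_{i/2}$ for even $i$. A lobster $L$ is pairwise balanced if $r$ is even and, for each odd $i\in\{1,\ldots,r-1\}$,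 the subtree consisting of $v_i,v_{i+1}$ together with the lobes $F_i,F_{i+1}$ is balanced (for a suitable indexing of its branches). *)

(* Defs.v *)
From mathcomp Require Import all_boot.
Set Implicit Arguments.
Unset Strict Implicit.
Unset Printing Implicit Defensive.

(* A finite simple graph: vertex type T : finType, adjacency e : rel T,
   assumed symmetric and irreflexive in the theorem. *)

Definition edges (T : finType) (e : rel T) : {set {set T}} :=
  [set [set p.1; p.2] | p in [set p : T * T | e p.1 p.2]].

Definition nedges (T : finType) (e : rel T) : nat := #|edges e|.

Definition absdiff (a b : nat) : nat := (a - b) + (b - a).

Definition alpha_labeling (T : finType) (e : rel T) (f : T -> nat) (k : nat) : Prop :=
  injective f /\
  (forall v, f v <= nedges e) /\
  (forall u v u' v', e u v -> e u' v' ->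
     absdiff (f u) (f v) = absdiff (f u') (f v') ->
     (u = u' /\ v = v') \/ (u = v' /\ v = u')) /\
  (forall u v, e u v -> (f u <= k < f v) \/ (f v <= k < f u)).

Definition complete_alpha_labeling (T : finType) (e : rel T) (f : T -> nat) (k : nat) : Prop :=
  alpha_labeling e f k /\ (forall n, n <= nedges e -> exists v, f v = n).

(* Spine (v_1,...,v_r) is represented 0-indexed as sp 0, ..., sp (r-1).
   Every non-spine vertex x has a "parent" par x: either par x is a spine
   vertex v_i (x is a neighbour of v_i in the lobe F_i), or par x is a
   non-spine vertex whose parent is a spine vertex (x is a further leaf
   attached to a neighbour of v_i). *)

Definition is_spine (T : finType) (r : nat) (sp : nat -> T) (x : T) : bool :=
  [exists i : 'I_r, sp i == x].

Definition lobster_description (T : finType) (e : rel T) (r : nat)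
    (sp : nat -> T) (par : T -> T) : Prop :=
  0 < r /\
  (forall i j, i < r -> j < r -> sp i = sp j -> i = j) /\
  (forall x, ~~ is_spine r sp x ->
     is_spine r sp (par x) \/
     (~~ is_spine r sp (par x) /\ is_spine r sp (par (par x)))) /\
  (forall x y, e x y <->
     ((exists i, i.+1 < r /\
         ((x = sp i /\ y = sp i.+1) \/ (y = sp i /\ x = sp i.+1))) \/
      (~~ is_spine r sp x /\ y = par x) \/
      (~~ is_spine r sp y /\ x = par y))).

Definition nleaves (T : finType) (r : nat) (sp : nat -> T) (par : T -> T) (u : T) : nat :=
  #|[set z | ~~ is_spine r sp z & par z == u]|.

Definition is_branch (T : finType) (r : nat) (sp : nat -> T) (par : T -> T) (w u : T) : bool :=
  [&& ~~ is_spine r sp u, par u == w & 0 < nleaves r sp par u].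

(* The two-spinal-vertex tree on w1, w2 (with their lobes) is balanced
   for a suitable indexing of its branches: the branches at w1 are listed
   (without repetition) as xs = [u_11; ...; u_1n], those at w2 as
   ys = [u_21; ...; u_2n] (same number n), and with x_i, y_i the leaf
   counts (1-indexed) the balance conditions hold. *)
Definition balanced_pair (T : finType) (r : nat) (sp : nat -> T) (par : T -> T)
    (w1 w2 : T) : Prop :=
  exists xs ys : seq T,
    uniq xs /\ uniq ys /\
        (forall u, (u \in xs) = is_branch r sp par w1 u) /\
        (forall u, (u \in ys) = is_branch r sp par w2 u) /\
        size xs = size ys /\
        (let n := size xs in
        let X := fun i => nleaves r sp par (nth w1 xs i.-1) in
        let Y := fun i => nleaves r sp par (nth w2 ys i.-1) in
        forall i, 1 <= i <= n ->
          if odd i then X i = Y (n - (i.-1)./2) /\ Y i = X (n - (i.-1)./2)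
          else X i = X (i./2) /\ Y i = Y (i./2)).

(* Pairwise balanced lobster: has a spine/lobe description with r even such
   that for each odd i in {1,...,r-1} (0-indexed: even j with j+1 < r) the
   pair v_i, v_{i+1} with lobes F_i, F_{i+1} is balanced. *)
Definition pairwise_balanced_lobster (T : finType) (e : rel T) : Prop :=
  exists (r : nat) (sp : nat -> T) (par : T -> T),
    lobster_description e r sp par /\ ~~ odd r /\
    (forall j, j.+1 < r -> ~~ odd j -> balanced_pair r sp par (sp j) (sp j.+1)).

(* Main.v *)
Require Import Defs.
From mathcomp Require Import all_boot.
From mathcomp Require Import all_boot zify.
From Stdlib Require Import IndefiniteDescription.
Set Implicit Arguments.
Unset Strict Implicit.
Unset Printing Implicit Defensive.

Fixpoint ssum (F : nat -> nat) (lo c : nat) : nat :=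
  if c is c'.+1 then F lo + ssum F lo.+1 c' else 0.

Lemma ssum_split F lo c1 c2 : ssum F lo (c1 + c2) = ssum F lo c1 + ssum F (lo + c1) c2.
Proof.
elim: c1 lo => [|c1 IH] lo /=; first by rewrite addn0.
by rewrite IH addnA addSnnS.
Qed.

Lemma ssum_add F G lo c : ssum (fun i => F i + G i) lo c = ssum F lo c + ssum G lo c.
Proof. elim: c lo => [|c IH] lo //=; rewrite IH; lia. Qed.

Lemma ssum_ge F lo c i : lo <= i < lo + c -> F i <= ssum F lo c.
Proof.
elim: c lo => [|c IH] lo /=; first lia.
move=> H; case: (ltnP lo i) => Hi.
  have := IH lo.+1 ltac:(lia); lia.
have -> : i = lo by lia. lia.
Qed.

Inductive skind := SW | SC of nat | SL of nat & nat | SP of nat.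

Section Side.
Variables (n : nat) (F : nat -> nat) (s : nat).

Definition SS t := ssum (fun i => (F i).+1) t (n.+1 - t).

Lemma SS_step t : t <= n -> SS t = SS t.+1 + (F t).+1.
Proof.
move=> Ht; rewrite /SS.
have -> : n.+1 - t = (n - t).+1 by lia.
have -> : n.+1 - t.+1 = n - t by lia.
by rewrite /= addnC.
Qed.

Lemma SS_end t : n < t -> SS t = 0.
Proof. by move=> Ht; rewrite /SS; have -> : n.+1 - t = 0 by lia. Qed.

Lemma SS_mono t t' : t <= t' -> SS t' <= SS t.
Proof.
move=> H; rewrite -(subnKC H); elim: (t' - t) => [|d IH]; first by rewrite addn0.
case: (leqP (t + d) n) => Hd.
  by rewrite addnS; have := SS_step Hd; lia.
by rewrite (@SS_end (t + d.+1)); lia.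
Qed.

Lemma SS_lt t t' : t < t' -> t <= n -> SS t' + (F t).+1 <= SS t.
Proof. move=> H1 H2; rewrite (SS_step H2); have := @SS_mono t.+1 t' H1; lia. Qed.

Definition svalid (k : skind) : bool :=
  match k with
  | SW => true
  | SC t => (1 <= t <= n)
  | SL t c => (1 <= t <= n) && (c < F t)
  | SP c => c < s
  end.

Definition spos (k : skind) : nat :=
  match k with
  | SW => 0
  | SC t => SS (n.+1 - t)
  | SL t c => SS t.+1 + c.+1
  | SP c => SS 1 + c.+1
  end.

Definition ssz := (SS 1).+1 + s.

Lemma SS_le1 t : 1 <= t -> SS t <= SS 1.
Proof. by move=> H; apply: SS_mono. Qed.

Lemma spos_lt k : svalid k -> spos k < ssz.
Proof.
rewrite /ssz; case: k => [|t|t c|c] /=; try lia.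
- move=> H; have := @SS_le1 (n.+1 - t); lia.
- move=> /andP [H1 H2]; have := @SS_step t ltac:(lia); have := @SS_le1 t ltac:(lia); lia.
Qed.

Lemma spos_pos k : svalid k -> k <> SW -> 0 < spos k.
Proof.
case: k => [|t|t c|c] //= H _; try lia.
have Ht : n.+1 - t <= n by lia.
rewrite (SS_step Ht); lia.
Qed.

Lemma spos_inj k k' : svalid k -> svalid k' -> spos k = spos k' -> k = k'.
Proof.
have key : forall t t', 1 <= t <= n -> 1 <= t' <= n -> SS t = SS t' -> t = t'.
  move=> t t' H1 H2 E; case: (ltngtP t t') => // L.
    have := SS_lt L; lia.
  have := SS_lt L; lia.
have Lin : forall t c u, 1 <= t <= n -> c < F t -> 1 <= u <= n.+1 ->
   SS t.+1 + c.+1 <> SS u.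
  move=> t c u H1 H2 H3 E; case: (leqP u t) => L.
    have := @SS_mono u t L; have := @SS_step t ltac:(lia); lia.
  have := @SS_mono t.+1 u L; lia.
case: k => [|t|t c|c] Hk; case: k' => [|t'|t' c'|c'] Hk' E; try reflexivity;
  try (move: (@spos_pos _ Hk' ltac:(discriminate)) E => /= ? ?; lia);
  try (move: (@spos_pos _ Hk ltac:(discriminate)) E => /= ? ?; lia); move: Hk Hk' E => /=.
- move=> H1 H2 E; have := key _ _ _ _ E; move=> /(_ ltac:(lia) ltac:(lia)) => ?; congr SC; lia.
- move=> H1 /andP [H2 H3] E; have := Lin _ _ (n.+1 - t) H2 H3; lia.
- move=> H1 H2 E. have H3 : SS (n.+1 - t) <= SS 1 by apply: SS_le1; lia. lia.
- move=> /andP [H2 H3] H1 E; have := Lin _ _ (n.+1 - t') H2 H3; lia.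
- move=> /andP [H1 H2] /andP [H1' H2'] E.
  case: (ltngtP t t') => L.
  + have := @SS_mono t.+1 t' L; have := @SS_step t' ltac:(lia); lia.
  + have := @SS_mono t'.+1 t L; have := @SS_step t ltac:(lia); lia.
  + subst; congr SL; lia.
- move=> /andP [H1 H2] H3 E; have := @SS_step t ltac:(lia); have := @SS_le1 t ltac:(lia); lia.
- move=> H1 H2 E. have H3 : SS (n.+1 - t') <= SS 1 by apply: SS_le1; lia. lia.
- move=> H1 /andP [H2 H3] E; have := @SS_step t' ltac:(lia); have := @SS_le1 t' ltac:(lia); lia.
- move=> _ _ E; congr SP; lia.
Qed.

Lemma find_block p lo : 1 <= lo -> 0 < p <= SS lo ->
  exists t, [/\ lo <= t <= n, SS t.+1 < p & p <= SS t].
Proof.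
move=> Hlo Hp.
have [d Hd] : exists d, d = n.+1 - lo by eexists.
elim: d lo Hd Hlo Hp => [|d IH] lo Hd Hlo Hp.
  by rewrite SS_end in Hp; lia.
case: (leqP p (SS lo.+1)) => L.
  have [t [H1 H2 H3]] := IH lo.+1 ltac:(lia) ltac:(lia) ltac:(lia).
  exists t; split => //; lia.
by exists lo; split; lia.
Qed.

Lemma spos_surj p : p < ssz -> exists k, svalid k /\ spos k = p.
Proof.
rewrite /ssz => Hp.
case: (posnP p) => [->|P0]; first by exists SW.
case: (leqP p (SS 1)) => L; last first.
  by exists (SP (p - (SS 1).+1)); rewrite /=; split; lia.
have [t [H1 H2 H3]] := find_block (p := p) (lo := 1) isT ltac:(lia).
case: (eqVneq p (SS t)) => E.
  exists (SC (n.+1 - t)); rewrite /=; split; first lia.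
  by have -> : n.+1 - (n.+1 - t) = t by lia.
exists (SL t (p - (SS t.+1).+1)); rewrite /=; split; last lia.
have := @SS_step t ltac:(lia); lia.
Qed.

End Side.
Section Rel.
Variables (n : nat) (F G : nat -> nat).
Hypothesis bal : forall i, 0 < i <= n ->
  (odd i -> F i = G (n - i./2) /\ G i = F (n - i./2)) /\
  (~~ odd i -> F i = F i./2 /\ G i = G i./2).

Lemma rel_a t : t.*2 <= n -> SS n F t.+1 = SS n F t.*2.+1 + SS n G (n.+1 - t).
Proof.
elim: t => [|t IH] H.
  by rewrite double0 subn0 (@SS_end n G n.+1) ?addn0.
have IH' := IH ltac:(lia).
have E1 := @SS_step n F t.+1 ltac:(lia).
have E2 := @SS_step n F t.*2.+1 ltac:(lia).
have E3 := @SS_step n F t.*2.+2 ltac:(lia).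
have E4 := @SS_step n G (n - t) ltac:(lia).
have B1' : F t.*2.+2 = F t.+1.
  have [_ B] := bal (i := t.*2.+2) ltac:(lia).
  have := B ltac:(by rewrite /= odd_double). rewrite -doubleS half_double. by case.
have B2' : F t.*2.+1 = G (n - t).
  have [B _] := bal (i := t.*2.+1) ltac:(lia).
  have := B ltac:(by rewrite /= odd_double). rewrite -[(t.*2.+1)./2]/(uphalf t.*2) uphalf_double. by case.
have -> : (t.+1).*2.+1 = t.*2.+3 by rewrite doubleS.
have -> : n.+1 - t.+1 = n - t by lia.
rewrite (_ : n.+1 - t = (n - t).+1) in IH'; last lia.
lia.
Qed.

Lemma rel_b u : u.*2 < n -> SS n G u.+1 = SS n F (n - u) + SS n G u.*2.+2.
Proof.
elim: u => [|u IH] H.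
  have [B _] := bal (i := 1) ltac:(lia).
  have [_ B'] := B isT.
  have E1 := @SS_step n G 1 ltac:(lia).
  have E2 := @SS_step n F n ltac:(lia).
  rewrite (@SS_end n F n.+1) // in E2.
  rewrite /= subn0 in B'. rewrite double0 subn0. lia.
have IH' := IH ltac:(lia).
have E1 := @SS_step n G u.+1 ltac:(lia).
have E2 := @SS_step n G u.*2.+2 ltac:(lia).
have E3 := @SS_step n G u.*2.+3 ltac:(lia).
have E4 := @SS_step n F (n - u.+1) ltac:(lia).
have B1' : G u.*2.+2 = G u.+1.
  have [_ B] := bal (i := u.*2.+2) ltac:(lia).
  have := B ltac:(by rewrite /= odd_double). rewrite -doubleS half_double. by case.
have B2' : G u.*2.+3 = F (n - u.+1).
  have [B _] := bal (i := u.*2.+3) ltac:(lia).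
  have := B ltac:(by rewrite /= odd_double). rewrite -doubleS -[((u.+1).*2.+1)./2]/(uphalf (u.+1).*2) uphalf_double. by case.
have -> : (u.+1).*2.+2 = u.*2.+4 by rewrite doubleS.
rewrite (_ : (n - u.+1).+1 = n - u) in E4; last lia.
lia.
Qed.
End Rel.
Section Pair.
Variables (n : nat) (X Y : nat -> nat) (s1 s2 : nat).
Hypothesis bal : forall i, 0 < i <= n ->
  (odd i -> X i = Y (n - i./2) /\ Y i = X (n - i./2)) /\
  (~~ odd i -> X i = X i./2 /\ Y i = Y i./2).

Lemma balYX : forall i, 0 < i <= n ->
  (odd i -> Y i = X (n - i./2) /\ X i = Y (n - i./2)) /\
  (~~ odd i -> Y i = Y i./2 /\ X i = X i./2).
Proof.
move=> i Hi; have [B1 B2] := bal Hi; split.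
  by move=> /B1 [? ?].
by move=> /B2 [? ?].
Qed.

Definition posA := spos n X.
Definition posB := spos n Y.
Definition validA := svalid n X s2.
Definition validB := svalid n Y s1.

Inductive ledge : skind -> skind -> Prop :=
| LE0 : ledge SW SW
| LE2 t : 0 < t <= n -> ledge SW (SC t)
| LE3 c : c < s1 -> ledge SW (SP c)
| LE4 t : 0 < t <= n -> ledge (SC t) SW
| LE5 c : c < s2 -> ledge (SP c) SW
| LE6 t c : 0 < t <= n -> c < X t -> ledge (SL t c) (SC t)
| LE7 t c : 0 < t <= n -> c < Y t -> ledge (SC t) (SL t c).

Lemma ledge_valid a b : ledge a b -> validA a /\ validB b.
Proof.
case=> [|t|c|t|c|t c|t c] /= *; rewrite /validA /validB /= ?andbT; split => //;
  by rewrite ?(andbT, andTb) //; apply/andP.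
Qed.

Definition tau (a b : skind) : bool * skind :=
  match a, b with
  | SW, SW => (false, SW)
  | SW, k => (false, k)
  | SC t, SW => (true, SC t)
  | SP c, SW => (true, SP c)
  | SL t c, _ => if t.*2 <= n then (true, SL t.*2 c)
                 else (false, SL (n - t).*2.+1 (X t - c.+1))
  | SC t, SL _ c => if t.*2 <= n then (false, SL t.*2 c)
                    else (true, SL (n - t).*2.+1 (Y t - c.+1))
  | _, _ => (false, SW)
  end.

Definition tau_ok a b :=
  let p := tau a b in
  if p.1 then [/\ validA p.2, p.2 <> SW & posB b + posA p.2 = posA a]
  else validB p.2 /\ posB b = posA a + posB p.2.

Lemma half_oddS k : (k.*2.+1)./2 = k.
Proof. by rewrite -[(k.*2.+1)./2]/(uphalf k.*2) uphalf_double. Qed.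

Lemma tau_spec a b : ledge a b -> tau_ok a b.
Proof.
rewrite /tau_ok; case=> [|t Ht|c Hc|t Ht|c Hc|t c Ht Hc|t c Ht Hc] /=.
- by [].
- by rewrite /posB /posA /=; lia.
- by rewrite /posB /posA /=.
- by split => //=; rewrite /posB /posA /=; lia.
- by split => //=; rewrite /posB /posA /=; lia.
- case: (leqP t.*2 n) => Ht2 /=.
  + have [_ B] := bal (i := t.*2) ltac:(lia).
    have [E _] := B ltac:(by rewrite odd_double). rewrite half_double in E.
    split => //=; first by rewrite E; apply/andP; split => //; lia.
    rewrite /posA /posB /=. have := rel_a bal Ht2. lia.
  + have Hj : 0 < (n - t).*2.+1 <= n by lia.
    have [B _] := bal Hj. have [_ E] := B ltac:(by rewrite /= odd_double).
    rewrite half_oddS (_ : n - (n - t) = t) in E; last lia.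
    split; first by rewrite /= E; apply/andP; split => //; lia.
    rewrite /posA /posB /=.
    have := rel_b bal (u := n - t) ltac:(lia).
    rewrite (_ : n - (n - t) = t); last lia.
    rewrite (_ : n.+1 - t = (n - t).+1); last lia.
    have := @SS_step n X t ltac:(lia). rewrite -addn2 -addnn. lia.
- case: (leqP t.*2 n) => Ht2 /=.
  + have [_ B] := bal (i := t.*2) ltac:(lia).
    have [_ E] := B ltac:(by rewrite odd_double). rewrite half_double in E.
    split => //=; first by rewrite E; apply/andP; split => //; lia.
    rewrite /posA /posB /=. have := rel_a balYX Ht2. lia.
  + have Hj : 0 < (n - t).*2.+1 <= n by lia.
    have [B _] := bal Hj. have [E _] := B ltac:(by rewrite /= odd_double).
    rewrite half_oddS (_ : n - (n - t) = t) in E; last lia.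
    split => //; first by rewrite /= E; apply/andP; split => //; lia.
    rewrite /posA /posB /=.
    have := rel_b balYX (u := n - t) ltac:(lia).
    rewrite (_ : n - (n - t) = t); last lia.
    rewrite (_ : n.+1 - t = (n - t).+1); last lia.
    have := @SS_step n Y t ltac:(lia). rewrite -addn2 -addnn. lia.
Qed.

Lemma tau_inj a b a' b' : ledge a b -> ledge a' b' -> tau a b = tau a' b' ->
  a = a' /\ b = b'.
Proof.
case=> [|t Ht|c Hc|t Ht|c Hc|t c Ht Hc|t c Ht Hc];
case=> [|t' Ht'|c' Hc'|t' Ht'|c' Hc'|t' c' Ht' Hc'|t' c' Ht' Hc'] //=;
  try (by case=> ->); try (by case=> -> ->);
  repeat case: ifP => ? //; case; intros; subst; try lia.
- have ? : t = t' by lia. subst. split => //; congr SL; lia.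
- have ? : t = t' by lia. subst. split => //; congr SL; lia.
- have ? : t = t' by lia. subst. split => //; congr SL; lia.
- have ? : t = t' by lia. subst. split => //; congr SL; lia.
Qed.

Lemma ldiff_inj a b a' b' : ledge a b -> ledge a' b' ->
  posB b + posA a' = posB b' + posA a -> a = a' /\ b = b'.
Proof.
move=> H H' E; apply: (tau_inj H H').
have := tau_spec H; have := tau_spec H'; rewrite /tau_ok.
case: (tau a b) => [[] k]; case: (tau a' b') => [[] k'] /=.
- move=> [V' N' E'] [V N E0]; congr pair.
  by apply: (spos_inj V V'); rewrite -/posA; lia.
- move=> [V' E'] [V N E0]. have := spos_pos V N. rewrite -/posA. lia.
- move=> [V' N' E'] [V E0]. have := spos_pos V' N'. rewrite -/posA. lia.
- move=> [V' E'] [V E0]; congr pair.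
  by apply: (spos_inj V V'); rewrite -/posB; lia.
Qed.

End Pair.
Lemma ssum_search F lo c l : l < ssum F lo c ->
  exists i, [/\ lo <= i < lo + c, ssum F lo (i - lo) <= l & l < ssum F lo (i - lo) + F i].
Proof.
elim: c lo l => [|c IH] lo l /=; first lia.
case: (ltnP l (F lo)) => L H.
  by exists lo; rewrite subnn /=; split; lia.
have [i [H1 H2 H3]] := IH lo.+1 (l - F lo) ltac:(lia).
exists i; rewrite (_ : i - lo = (i - lo.+1).+1) /=; last lia.
split; lia.
Qed.

Lemma ssum_S F lo c : ssum F lo c.+1 = F lo + ssum F lo.+1 c.
Proof. by []. Qed.

Lemma ssum_rcons F lo c : ssum F lo c.+1 = ssum F lo c + F (lo + c).
Proof. by rewrite -addn1 ssum_split /= addn0. Qed.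

Lemma ssum_cut F J q : J < q -> ssum F 0 q = ssum F 0 J + F J + ssum F J.+1 (q - J.+1).
Proof.
move=> H; rewrite {1}(_ : q = J + (q - J.+1).+1); last lia.
by rewrite ssum_split add0n ssum_S addnA.
Qed.

Section Global.
Variables (q : nat) (nn : nat -> nat) (XX YY : nat -> nat -> nat) (S1 S2 : nat -> nat).
Hypothesis gbal : forall J, J < q -> forall i, 0 < i <= nn J ->
  (odd i -> XX J i = YY J (nn J - i./2) /\ YY J i = XX J (nn J - i./2)) /\
  (~~ odd i -> XX J i = XX J i./2 /\ YY J i = YY J i./2).

Definition aS J := ssz (nn J) (XX J) (S2 J).
Definition bS J := ssz (nn J) (YY J) (S1 J).
Definition KA J := ssum aS 0 J.
Definition Atot := KA q.
Definition Btot := ssum bS 0 q.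
Definition KB J := ssum bS J.+1 (q - J.+1).
Definition EE J := ssum (fun i => aS i + bS i) J.+1 (q - J.+1).

Definition gk := (nat * bool * skind)%type.

Definition gvalid (x : gk) : bool :=
  let: (J, sd, k) := x in
  (J < q) && (if sd then svalid (nn J) (XX J) (S2 J) k else svalid (nn J) (YY J) (S1 J) k).

Definition glab (x : gk) : nat :=
  let: (J, sd, k) := x in
  if sd then KA J + spos (nn J) (XX J) k else Atot + KB J + spos (nn J) (YY J) k.

Inductive gedge : gk -> gk -> Prop :=
| GL J a b : J < q -> ledge (nn J) (XX J) (YY J) (S1 J) (S2 J) a b -> gedge (J, true, a) (J, false, b)
| GC J : J.+1 < q -> gedge (J.+1, true, SW) (J, false, SW).

Lemma aS_pos J : 0 < aS J. Proof. by rewrite /aS /ssz. Qed.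
Lemma bS_pos J : 0 < bS J. Proof. by rewrite /bS /ssz. Qed.

Lemma KA_mono J J' : J < J' -> KA J + aS J <= KA J'.
Proof.
move=> H; rewrite /KA -(subnKC H) ssum_split ssum_rcons add0n; lia.
Qed.

Lemma KA_S J : KA J.+1 = KA J + aS J.
Proof. by rewrite /KA ssum_rcons. Qed.

Lemma KA_tot J : J < q -> KA J + aS J <= Atot.
Proof. exact: KA_mono. Qed.

Lemma Btot_cut J : J < q -> Btot = ssum bS 0 J + bS J + KB J.
Proof. exact: ssum_cut. Qed.

Lemma I1 J : J < q -> Atot + KB J = KA J + aS J + EE J.
Proof.
move=> H; rewrite /Atot /KA /EE ssum_add (ssum_cut _ H) /KB; lia.
Qed.

Lemma I2 J : J.+1 < q -> EE J = EE J.+1 + aS J.+1 + bS J.+1.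
Proof.
move=> H; rewrite /EE (_ : q - J.+1 = (q - J.+2).+1) ?ssum_S; lia.
Qed.

Lemma I3 J J' : J < J' -> J' < q -> EE J' + aS J' + bS J' <= EE J.
Proof.
elim: J' => [//|J' IH] H1 H2.
have E := I2 (J:=J') H2.
case: (eqVneq J J') => [->|ne]; first lia.
have := IH ltac:(lia) ltac:(lia); lia.
Qed.

Lemma KB_mono J J' : J < J' -> J' < q -> KB J' + bS J' <= KB J.
Proof.
move=> H1 H2; rewrite /KB.
rewrite (_ : q - J.+1 = (J' - J.+1) + (q - J'.+1).+1); last lia.
rewrite ssum_split (_ : J.+1 + (J' - J.+1) = J') ?ssum_S; lia.
Qed.

Lemma glab_A J k : gvalid (J, true, k) -> glab (J, true, k) < Atot.
Proof.
move=> /andP [H1 H2] /=; have := spos_lt H2; have := KA_tot H1; rewrite /aS; lia.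
Qed.

Lemma glab_B J k : gvalid (J, false, k) -> Atot <= glab (J, false, k) < Atot + Btot.
Proof.
move=> /andP [H1 H2] /=; have := spos_lt H2; have := Btot_cut H1; rewrite /bS; lia.
Qed.

Lemma glab_lt x : gvalid x -> glab x < Atot + Btot.
Proof.
case: x => [[J []] k] H; first by have := glab_A H; lia.
by have := glab_B H; lia.
Qed.

Lemma glab_inj x y : gvalid x -> gvalid y -> glab x = glab y -> x = y.
Proof.
case: x => [[J []] k]; case: y => [[J' []] k'] Hx Hy E.
- have := Hx; have := Hy; move=> /andP [H1 H2] /andP [H1' H2'].
  move: E; rewrite /=.
  have L1 := spos_lt H2; have L2 := spos_lt H2'.
  case: (ltngtP J J') => L.
  + have := KA_mono L; rewrite /aS in L1 L2 *; lia.
  + have := KA_mono L; rewrite /aS in L1 L2 *; lia.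
  + subst J' => E; have E' : spos (nn J) (XX J) k' = spos (nn J) (XX J) k by lia.
    by rewrite (spos_inj H2' H2 (esym E')).
- have := glab_A Hx; have := glab_B Hy; lia.
- have := glab_A Hy; have := glab_B Hx; lia.
- have := Hx; have := Hy; move=> /andP [H1 H2] /andP [H1' H2'].
  move: E; rewrite /=.
  have L1 := spos_lt H2; have L2 := spos_lt H2'.
  case: (ltngtP J J') => L.
  + have := KB_mono L H1; rewrite /bS in L1 L2 *; lia.
  + have := KB_mono L H1'; rewrite /bS in L1 L2 *; lia.
  + subst J' => E; have E' : spos (nn J) (YY J) k' = spos (nn J) (YY J) k by lia.
    by rewrite (spos_inj H2' H2 (esym E')).
Qed.

Lemma glab_surj l : l < Atot + Btot -> exists x, gvalid x /\ glab x = l.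
Proof.
move=> H; case: (ltnP l Atot) => L.
  have [J [H1 H2 H3]] := ssum_search L.
  rewrite subn0 in H2 H3.
  have [k [Hk Ek]] := @spos_surj (nn J) (XX J) (S2 J) (l - KA J) ltac:(rewrite -/(aS J) /KA; lia).
  exists (J, true, k); split; first by rewrite /= Hk andbT; lia.
  by rewrite /= Ek /KA; lia.
have L' : Btot - (l - Atot).+1 < Btot by lia.
have [J [H1 H2 H3]] := ssum_search L'.
rewrite subn0 in H2 H3.
have HJ : J < q by lia.
have E := Btot_cut HJ.
have [k [Hk Ek]] := @spos_surj (nn J) (YY J) (S1 J) (l - Atot - KB J) ltac:(rewrite -/(bS J); lia).
exists (J, false, k); split; first by rewrite /= Hk andbT.
by rewrite /= Ek; lia.
Qed.

Lemma gedge_valid x y : gedge x y -> gvalid x /\ gvalid y.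
Proof.
case=> [J a b HJ Hl|J HJ] /=; last by rewrite !andbT; lia.
by have [V1 V2] := ledge_valid Hl; rewrite HJ; split.
Qed.

Lemma gedge_sides x y : gedge x y -> x.1.2 = true /\ y.1.2 = false.
Proof. by case. Qed.

Lemma gdiff_inj x y x' y' : gedge x y -> gedge x' y' ->
  glab y + glab x' = glab y' + glab x -> x = x' /\ y = y'.
Proof.
move=> G G'; have [Vx Vy] := gedge_valid G; have [Vx' Vy'] := gedge_valid G'.
case: G Vx Vy => [J a b HJ Hl|J HJ]; case: G' Vx' Vy' => [J' a' b' HJ' Hl'|J' HJ'] /=.
- move=> _ _ _ _ E.
  have [Va0 Vb0] := ledge_valid Hl; have [Va0' Vb0'] := ledge_valid Hl'.
  have La := spos_lt Va0; have La' := spos_lt Va0'.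
  have Lb := spos_lt Vb0; have Lb' := spos_lt Vb0'.
  have E1 := I1 HJ; have E2 := I1 HJ'.
  rewrite /aS /bS in La La' Lb Lb' E1 E2.
  case: (ltngtP J J') => L.
  + have := I3 L HJ'; rewrite /aS /bS; lia.
  + have := I3 L HJ; rewrite /aS /bS; lia.
  + subst J'.
    have [-> ->] := ldiff_inj (gbal HJ) Hl Hl' ltac:(rewrite /posA /posB; lia).
    by [].
- move=> _ _ _ _ E.
  have [Va0 Vb0] := ledge_valid Hl.
  have La := spos_lt Va0; have Lb := spos_lt Vb0.
  have E1 := I1 HJ; have E2 := I1 (ltnW HJ'); have E3 := KA_S J'.
  rewrite /aS /bS in La Lb E1 E2 E3.
  case: (ltngtP J J') => L.
  + have := I3 L (ltnW HJ'); rewrite /aS /bS; lia.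
  + have := I3 L HJ; rewrite /aS /bS; lia.
  + subst; lia.
- move=> _ _ _ _ E.
  have [Va0 Vb0] := ledge_valid Hl'.
  have La := spos_lt Va0; have Lb := spos_lt Vb0.
  have E1 := I1 HJ'; have E2 := I1 (ltnW HJ); have E3 := KA_S J.
  rewrite /aS /bS in La Lb E1 E2 E3.
  case: (ltngtP J J') => L.
  + have := I3 L HJ'; rewrite /aS /bS; lia.
  + have := I3 L (ltnW HJ); rewrite /aS /bS; lia.
  + subst; lia.
- move=> _ _ _ _ E.
  have E1 := I1 (ltnW HJ); have E2 := I1 (ltnW HJ'); have E3 := KA_S J; have E4 := KA_S J'.
  case: (ltngtP J J') => L.
  + have := I3 L (ltnW HJ'); have := aS_pos J'; lia.
  + have := I3 L (ltnW HJ); have := aS_pos J; lia.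
  + by subst.
Qed.

End Global.
Definition bp_body (T : finType) (r : nat) (sp : nat -> T) (par : T -> T)
    (w1 w2 : T) (xs ys : seq T) : Prop :=
    uniq xs /\ uniq ys /\
        (forall u, (u \in xs) = is_branch r sp par w1 u) /\
        (forall u, (u \in ys) = is_branch r sp par w2 u) /\
        size xs = size ys /\
        (let n := size xs in
        let X := fun i => nleaves r sp par (nth w1 xs i.-1) in
        let Y := fun i => nleaves r sp par (nth w2 ys i.-1) in
        forall i, 1 <= i <= n ->
          if odd i then X i = Y (n - (i.-1)./2) /\ Y i = X (n - (i.-1)./2)
          else X i = X (i./2) /\ Y i = Y (i./2)).

Lemma odd_bJ (b : bool) J : odd (b + J.*2) = b.
Proof. by rewrite oddD odd_double addbF oddb. Qed.

Section Tlevel.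
Variables (T : finType) (e : rel T) (r : nat) (sp : nat -> T) (par : T -> T).
Hypothesis Hsym : symmetric e.
Hypothesis Hirr : irreflexive e.
Hypothesis Hlob : lobster_description e r sp par.
Hypothesis Hr : ~~ odd r.
Variables (xsf ysf : nat -> seq T).
Hypothesis Hbp : forall J, J < r./2 ->
  bp_body r sp par (sp J.*2) (sp J.*2.+1) (xsf J) (ysf J).

Definition q := r./2.
Definition ispine x := is_spine r sp x.
Definition idx x : nat := if [pick i : 'I_r | sp i == x] is Some i then nat_of_ord i else 0.
Definition leavesS u := [set z | ~~ ispine z & par z == u].
Definition pendS w := [set z | [&& ~~ ispine z, par z == w & nleaves r sp par z == 0]].
Definition rank (S : {set T}) x := index x (enum S).
Definition cs' (b : bool) J := if b then ysf J else xsf J.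

Definition nn J := size (xsf J).
Definition XX J t := nleaves r sp par (nth (sp J.*2) (xsf J) t.-1).
Definition YY J t := nleaves r sp par (nth (sp J.*2.+1) (ysf J) t.-1).
Definition S1 J := #|pendS (sp J.*2)|.
Definition S2 J := #|pendS (sp J.*2.+1)|.

Definition cls (x : T) : gk :=
  if ispine x then let i := idx x in (i./2, ~~ odd i, SW)
  else if ispine (par x) then
    let i := idx (par x) in
    if 0 < nleaves r sp par x then (i./2, odd i, SC (index x (cs' (odd i) i./2)).+1)
    else (i./2, odd i, SP (rank (pendS (par x)) x))
  else let u := par x in let i := idx (par u) in
    (i./2, ~~ odd i, SL (index u (cs' (odd i) i./2)).+1 (rank (leavesS u) x)).

Definition decode (k : gk) : T :=
  let: (J, sd, sk) := k in
  match sk with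
  | SW => sp ((~~ sd) + J.*2)
  | SC t => nth (sp (sd + J.*2)) (cs' sd J) t.-1
  | SP c => nth (sp (sd + J.*2)) (enum (pendS (sp (sd + J.*2)))) c
  | SL t c => let u := nth (sp ((~~ sd) + J.*2)) (cs' (~~ sd) J) t.-1 in
              nth (sp ((~~ sd) + J.*2)) (enum (leavesS u)) c
  end.

Lemma Hr0 : 0 < r. Proof. by case: Hlob. Qed.
Lemma Hspinj i j : i < r -> j < r -> sp i = sp j -> i = j.
Proof. by case: Hlob => _ [H _]; apply: H. Qed.
Lemma Hpar x : ~~ ispine x ->
  ispine (par x) \/ (~~ ispine (par x) /\ ispine (par (par x))).
Proof. by case: Hlob => _ [_ [H _]]; apply: H. Qed.
Lemma Hedge x y : e x y <->
     ((exists i, i.+1 < r /\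
         ((x = sp i /\ y = sp i.+1) \/ (y = sp i /\ x = sp i.+1))) \/
      (~~ ispine x /\ y = par x) \/
      (~~ ispine y /\ x = par y)).
Proof. by case: Hlob => _ [_ [_ H]]; apply: H. Qed.

Lemma idxP x : ispine x -> idx x < r /\ sp (idx x) = x.
Proof.
rewrite /ispine /is_spine /idx => /existsP [i /eqP Hi].
case: pickP => [j /eqP Hj | H]; first by split.
by move: (H i); rewrite Hi eqxx.
Qed.

Lemma spine_sp i : i < r -> ispine (sp i).
Proof. by move=> H; apply/existsP; exists (Ordinal H). Qed.

Lemma idx_sp i : i < r -> idx (sp i) = i.
Proof. by move=> H; have [H1 H2] := idxP (spine_sp H); apply: Hspinj. Qed.

Lemma r_half : r = r./2.*2.
Proof. by have := odd_double_half r; rewrite (negbTE Hr) add0n. Qed.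

Lemma bJ_lt (b : bool) J : J < q -> b + J.*2 < r.
Proof. rewrite /q => H; have := r_half; case: b => /=; lia. Qed.

Lemma split_idx i : i < r -> exists (b : bool) J, i = b + J.*2 /\ J < q.
Proof.
move=> H; exists (odd i), i./2; rewrite odd_double_half; split => //.
rewrite /q; have := r_half; have := odd_double_half i; case: (odd i) => /=; lia.
Qed.

Lemma cs_spec (b : bool) J : J < q -> uniq (cs' b J) /\
  (forall u, (u \in cs' b J) = is_branch r sp par (sp (b + J.*2)) u).
Proof.
move=> /Hbp [U1 [U2 [M1 [M2 _]]]]; case: b => /=; by split.
Qed.

Lemma cs_size (b : bool) J : J < q -> size (cs' b J) = nn J.
Proof. by move=> /Hbp [_ [_ [_ [_ [E _]]]]]; case: b. Qed.

Lemma rank_lt (S : {set T}) x : x \in S -> rank S x < #|S|.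
Proof. by move=> H; rewrite /rank cardE index_mem mem_enum. Qed.

Lemma nth_rank (S : {set T}) x y : x \in S -> nth y (enum S) (rank S x) = x.
Proof. by move=> H; rewrite /rank nth_index // mem_enum. Qed.

Lemma rank_nth (S : {set T}) c y : c < #|S| -> rank S (nth y (enum S) c) = c.
Proof. by move=> H; rewrite /rank index_uniq // ?enum_uniq // -cardE. Qed.

Lemma nth_enum_in (S : {set T}) c y : c < #|S| -> nth y (enum S) c \in S.
Proof. by move=> H; rewrite -mem_enum mem_nth // -cardE. Qed.

Lemma cls_spine (b : bool) J : J < q -> cls (sp (b + J.*2)) = (J, ~~ b, SW).
Proof.
move=> H; rewrite /cls spine_sp ?bJ_lt // idx_sp ?bJ_lt //.
by rewrite half_bit_double odd_bJ.
Qed.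

Lemma branch_facts (b : bool) J x : J < q -> x \in cs' b J ->
  [/\ ~~ ispine x, par x = sp (b + J.*2) & 0 < nleaves r sp par x].
Proof.
move=> HJ; have [_ M] := cs_spec b HJ; rewrite M /is_branch => /and3P [A /eqP B C].
by split.
Qed.

Lemma cls_branch (b : bool) J x : J < q -> x \in cs' b J ->
  cls x = (J, b, SC (index x (cs' b J)).+1).
Proof.
move=> HJ Hx; have [A B C] := branch_facts HJ Hx.
rewrite /cls (negbTE A) B spine_sp ?bJ_lt // idx_sp ?bJ_lt // C.
by rewrite half_bit_double odd_bJ.
Qed.

Lemma cls_pend (b : bool) J x : J < q -> x \in pendS (sp (b + J.*2)) ->
  cls x = (J, b, SP (rank (pendS (sp (b + J.*2))) x)).
Proof.
move=> HJ; rewrite inE => /and3P [A /eqP B /eqP C].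
rewrite /cls (negbTE A) B spine_sp ?bJ_lt // idx_sp ?bJ_lt // C /=.
by rewrite half_bit_double odd_bJ.
Qed.

Lemma cls_leaf (b : bool) J u x : J < q -> u \in cs' b J -> x \in leavesS u ->
  cls x = (J, ~~ b, SL (index u (cs' b J)).+1 (rank (leavesS u) x)).
Proof.
move=> HJ Hu; have [A B C] := branch_facts HJ Hu.
rewrite inE => /andP [D /eqP E].
rewrite /cls (negbTE D) E (negbTE A) B idx_sp ?bJ_lt //.
by rewrite half_bit_double odd_bJ.
Qed.

Inductive classify_spec (x : T) : Prop :=
| CSpine (b : bool) J of J < q & x = sp (b + J.*2)
| CBranch (b : bool) J of J < q & x \in cs' b J
| CPend (b : bool) J of J < q & x \in pendS (sp (b + J.*2))
| CLeaf (b : bool) J u of J < q & u \in cs' b J & x \in leavesS u.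

Lemma classify x : classify_spec x.
Proof.
case: (boolP (ispine x)) => Hs.
  have [H1 H2] := idxP Hs; have [b [J [E HJ]]] := split_idx H1.
  by apply: (CSpine HJ); rewrite -H2 E.
case: (Hpar Hs) => [Hp | [Hp Hpp]].
  have [H1 H2] := idxP Hp; have [b [J [E HJ]]] := split_idx H1.
  case: (posnP (nleaves r sp par x)) => Hn.
    apply: (CPend (b := b) HJ); rewrite inE Hs Hn -E H2 eqxx; by [].
  apply: (CBranch (b := b) HJ); have [_ M] := cs_spec b HJ.
  by rewrite M /is_branch Hs Hn -E H2 eqxx.
have [H1 H2] := idxP Hpp; have [b [J [E HJ]]] := split_idx H1.
have Hx : x \in leavesS (par x) by rewrite inE Hs eqxx.
apply: (CLeaf (b := b) HJ _ Hx); have [_ M] := cs_spec b HJ.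
rewrite M /is_branch Hp -E H2 eqxx /=.
by rewrite /nleaves (cardD1 x) -/(leavesS (par x)) Hx.
Qed.

Lemma cls_valid x : gvalid q nn XX YY S1 S2 (cls x).
Proof.
case: (classify x) => [b J HJ ->|b J HJ Hx|b J HJ Hx|b J u HJ Hu Hx].
- by rewrite cls_spine //= HJ; case: b.
- rewrite (cls_branch HJ Hx) /= HJ /=.
  have := cs_size b HJ; rewrite -index_mem in Hx.
  by case: b Hx => /= Hx E; rewrite -E.
- rewrite (cls_pend HJ Hx) /= HJ /=; have := rank_lt Hx.
  by case: b Hx.
- rewrite (cls_leaf HJ Hu Hx) /= HJ /=.
  have := cs_size b HJ; have Hu' := Hu; rewrite -index_mem in Hu'.
  have Hr' := rank_lt Hx.
  case: b Hu Hu' Hr' => /= Hu Hu' Hr' E; rewrite -E Hu' /= ?/YY ?/XX /=.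
  + by rewrite (set_nth_default u) // nth_index.
  + by rewrite (set_nth_default u) // nth_index.
Qed.

Lemma decode_cls x : decode (cls x) = x.
Proof.
case: (classify x) => [b J HJ ->|b J HJ Hx|b J HJ Hx|b J u HJ Hu Hx].
- by rewrite cls_spine //= negbK.
- by rewrite (cls_branch HJ Hx) /= nth_index.
- by rewrite (cls_pend HJ Hx) /= nth_rank.
- by rewrite (cls_leaf HJ Hu Hx) /= negbK nth_index // nth_rank.
Qed.

Lemma cls_inj : injective cls.
Proof. by move=> x y E; rewrite -(decode_cls x) -(decode_cls y) E. Qed.

Lemma cls_decode k : gvalid q nn XX YY S1 S2 k -> cls (decode k) = k.
Proof.
case: k => [[J sd] sk] /= /andP [HJ V].
case: sk V => [|t|t c|c] /= V.
- by rewrite cls_spine // negbK.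
- have Vt : 0 < t <= nn J by case: sd V.
  have Ht : t.-1 < size (cs' sd J) by rewrite cs_size //; lia.
  have Hm := mem_nth (sp (sd + J.*2)) Ht.
  rewrite (cls_branch HJ Hm) index_uniq //; last by case: (cs_spec sd HJ).
  by congr (_, _, SC _); lia.
- have Vt : 0 < t <= nn J by case: sd V => /= /andP [].
  have Ht : t.-1 < size (cs' (~~ sd) J) by rewrite cs_size //; lia.
  have Hu : nth (sp ((~~ sd) + J.*2)) (cs' (~~ sd) J) t.-1 \in cs' (~~ sd) J by rewrite mem_nth.
  have Hc : c < #|leavesS (nth (sp ((~~ sd) + J.*2)) (cs' (~~ sd) J) t.-1)|.
    by case: sd V Ht Hu => /= /andP [_ V] Ht Hu; exact V.
  rewrite (cls_leaf HJ Hu (nth_enum_in _ Hc)) negbK rank_nth //.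
  rewrite index_uniq //; last by case: (cs_spec (~~ sd) HJ).
  by congr (_, _, SL _ _); lia.
- have Hc : c < #|pendS (sp (sd + J.*2))| by case: sd V.
  by rewrite (cls_pend HJ (nth_enum_in _ Hc)) rank_nth.
Qed.

Lemma par_gedge x : ~~ ispine x ->
  gedge q nn XX YY S1 S2 (cls x) (cls (par x)) \/
  gedge q nn XX YY S1 S2 (cls (par x)) (cls x).
Proof.
move=> Hs; have V := cls_valid x.
case: (classify x) V => [b J HJ Ex|b J HJ Hx|b J HJ Hx|b J u HJ Hu Hx] V.
- by rewrite Ex spine_sp ?bJ_lt in Hs.
- have [_ B _] := branch_facts HJ Hx.
  rewrite B cls_spine // (cls_branch HJ Hx) in V *.
  move: V => /= /andP [_ V].
  clear Hx B; case: b V => V; [left | right]; apply: GL => //; [apply: LE4 | apply: LE2]; lia.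
- move: (Hx); rewrite inE => /and3P [_ /eqP B _].
  rewrite B cls_spine // (cls_pend HJ Hx) in V *.
  move: V => /= /andP [_ V].
  by clear Hx B; case: b V => V; [left | right]; apply: GL => //; [apply: LE5 | apply: LE3].
- move: (Hx); rewrite inE => /andP [_ /eqP B].
  rewrite B (cls_branch HJ Hu) (cls_leaf HJ Hu Hx) in V *.
  clear Hx B; case: b Hu V => Hu /= /andP [_ /andP [V1 V2]]; [right | left]; apply: GL => //.
  + by apply: LE7 => //; lia.
  + by apply: LE6 => //; lia.
Qed.

Lemma spine_gedge i : i.+1 < r ->
  gedge q nn XX YY S1 S2 (cls (sp i)) (cls (sp i.+1)) \/
  gedge q nn XX YY S1 S2 (cls (sp i.+1)) (cls (sp i)).
Proof.
move=> H; have [b [J [E HJ]]] := split_idx (ltnW H).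
case: b E => E; subst i.
- have HJ1 : J.+1 < q by have := r_half; move: H; rewrite /q /=; lia.
  right; rewrite -[(true + J.*2).+1]/(false + (J.+1).*2).
  rewrite (cls_spine true HJ) (cls_spine false HJ1) /=.
  exact: GC.
- left; rewrite -[(false + J.*2).+1]/(true + J.*2).
  rewrite (cls_spine true HJ) (cls_spine false HJ) /=.
  by apply: GL => //; apply: LE0.
Qed.

Lemma edge_gedge x y : e x y ->
  gedge q nn XX YY S1 S2 (cls x) (cls y) \/ gedge q nn XX YY S1 S2 (cls y) (cls x).
Proof.
move/Hedge => [[i [H [[-> ->]|[-> ->]]]]|[[Hs ->]|[Hs ->]]].
- exact: spine_gedge.
- by case: (spine_gedge H) => ?; [right | left].
- exact: par_gedge.
- by case: (par_gedge Hs) => ?; [right | left].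
Qed.

Definition parent x := if ispine x then sp (idx x).-1 else par x.
Definition depth x := if ispine x then idx x else if ispine (par x) then r else r.+1.

Lemma parent_edge x : x != sp 0 -> e x (parent x) /\ depth (parent x) < depth x.
Proof.
move=> Hx; rewrite /parent /depth; case: (boolP (ispine x)) => Hs.
  have [H1 H2] := idxP Hs.
  have i0 : idx x != 0 by apply: contraNneq Hx => E; rewrite -H2 E.
  split.
    apply/Hedge; left; exists (idx x).-1; split; first lia.
    by right; split => //; rewrite prednK ?lt0n.
  rewrite spine_sp ?idx_sp; lia.
split; first by apply/Hedge; right; left.
case: (Hpar Hs) => [Hp | [Hp Hpp]].
  by rewrite Hp; have [H1 _] := idxP Hp.
by rewrite (negbTE Hp) Hpp.
Qed.

Lemma edge_parent x y : e x y -> y = parent x \/ x = parent y.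
Proof.
move/Hedge => [[i [H [[-> ->]|[-> ->]]]]|[[Hs ->]|[Hs ->]]].
- by right; rewrite /parent spine_sp // idx_sp.
- by left; rewrite /parent spine_sp // idx_sp.
- by left; rewrite /parent (negbTE Hs).
- by right; rewrite /parent (negbTE Hs).
Qed.

Lemma parent_sp0 : parent (sp 0) = sp 0.
Proof. by rewrite /parent spine_sp ?Hr0 // idx_sp ?Hr0. Qed.

Lemma nedges_card : nedges e = #|T|.-1.
Proof.
rewrite /nedges.
have -> : edges e = [set [set x; parent x] | x in [set~ sp 0]].
  apply/setP => S; apply/imsetP/imsetP.
  - move=> [p]; rewrite inE => Hp ->.
    case: (edge_parent Hp) => E.
      exists p.1; last by rewrite E.
      rewrite !inE; apply: contraTneq Hp => E0.
      by rewrite E E0 parent_sp0 Hirr.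
    exists p.2.
      rewrite !inE; apply: contraTneq Hp => E0.
      by rewrite E E0 parent_sp0 Hirr.
    by rewrite E; apply/setP => z; rewrite !inE orbC.
  - move=> [x]; rewrite !inE => Hx ->; exists (x, parent x) => //.
    by rewrite inE; exact: (parent_edge Hx).1.
rewrite card_in_imset ?cardsC1 //.
move=> x y; rewrite !inE => Hx Hy E.
have : x \in [set y; parent y] by rewrite -E set21.
rewrite in_set2 => /orP [/eqP //| /eqP Ex].
have : y \in [set x; parent x] by rewrite E set21.
rewrite in_set2 => /orP [/eqP -> //| /eqP Ey].
have := (parent_edge Hx).2; have := (parent_edge Hy).2.
rewrite -Ex -Ey; lia.
Qed.

Lemma half_pred_odd i : odd i -> (i.-1)./2 = i./2.
Proof.
move=> Ho; move: (odd_double_half i); rewrite Ho; move: (i./2) => k <-.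
by rewrite (_ : (true + k.*2).-1 = k.*2) // half_double.
Qed.

Lemma gbal_ok : forall J, J < q -> forall i, 0 < i <= nn J ->
  (odd i -> XX J i = YY J (nn J - i./2) /\ YY J i = XX J (nn J - i./2)) /\
  (~~ odd i -> XX J i = XX J i./2 /\ YY J i = YY J i./2).
Proof.
move=> J HJ i Hi; have [_ [_ [_ [_ [_ B]]]]] := Hbp HJ.
have := B i Hi; case: (boolP (odd i)) => Ho H.
- split => Ho'; last by move: Ho'.
  by rewrite half_pred_odd in H.
- split => Ho'; first by move: Ho'.
  exact H.
Qed.

Definition flab x := glab q nn XX YY S1 S2 (cls x).
Definition NN := Atot q nn XX S2 + Btot q nn YY S1.

Lemma gedge_lab a b : gedge q nn XX YY S1 S2 a b ->
  glab q nn XX YY S1 S2 a < Atot q nn XX S2 <= glab q nn XX YY S1 S2 b.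
Proof.
move=> G; have [Va Vb] := gedge_valid G.
case: G Va Vb => [J a' b' HJ Hl|J HJ] Va Vb.
- by have := glab_A Va; have := glab_B Vb; lia.
- by have := glab_A Va; have := glab_B Vb; lia.
Qed.

Lemma flab_inj : injective flab.
Proof.
move=> x y E; apply: cls_inj; exact: (glab_inj (cls_valid x) (cls_valid y) E).
Qed.

Lemma flab_lt x : flab x < NN.
Proof. exact: glab_lt (cls_valid x). Qed.

Lemma flab_surj l : l < NN -> exists x, flab x = l.
Proof.
move=> /glab_surj [k [Vk Ek]]; exists (decode k).
by rewrite /flab cls_decode.
Qed.

Lemma card_T : #|T| = NN.
Proof.
apply/eqP; rewrite eqn_leq; apply/andP; split.
  have := leq_card (fun x => Ordinal (flab_lt x)).
  rewrite card_ord; apply => x y [] /flab_inj.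
  by [].
pose h (i : 'I_NN) := odflt (sp 0) [pick x | flab x == i].
have hP : forall i : 'I_NN, flab (h i) = i.
  move=> i; rewrite /h; case: pickP => [x /eqP //|H].
  have [x Ex] := flab_surj (ltn_ord i).
  by move: (H x); rewrite Ex eqxx.
have := @leq_card _ _ h; rewrite card_ord; apply.
by move=> i j E; apply: val_inj => /=; rewrite -(hP i) -(hP j) E.
Qed.

Lemma main_in : exists (f : T -> nat) (k : nat), complete_alpha_labeling e f k.
Proof.
have Hned : nedges e = NN.-1 by rewrite nedges_card card_T.
have NN0 : 0 < NN by have := flab_lt (sp 0); lia.
exists flab, (Atot q nn XX S2).-1.
split; last first.
  move=> l Hl; apply: flab_surj; rewrite Hned in Hl; lia.
split; first exact: flab_inj.
split; first by move=> v; rewrite Hned; have := flab_lt v; lia.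
split.
  move=> u v u' v' H H' D.
  rewrite /absdiff /flab in D.
  case: (edge_gedge H) => O; case: (edge_gedge H') => O';
    have := gedge_lab O; have := gedge_lab O' => L1 L2.
  - have [E1 E2] := gdiff_inj gbal_ok O O' ltac:(lia).
    by left; split; apply: cls_inj.
  - have [E1 E2] := gdiff_inj gbal_ok O O' ltac:(lia).
    by right; split; apply: cls_inj.
  - have [E1 E2] := gdiff_inj gbal_ok O O' ltac:(lia).
    by right; split; apply: cls_inj.
  - have [E1 E2] := gdiff_inj gbal_ok O O' ltac:(lia).
    by left; split; apply: cls_inj.
move=> u v H; rewrite /flab.
case: (edge_gedge H) => O; have := gedge_lab O => L; [left | right]; lia.
Qed.

End Tlevel.

Theorem corollary4p12 (T : finType) (e : rel T) :
  symmetric e -> irreflexive e -> pairwise_balanced_lobster e ->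
  exists (f : T -> nat) (k : nat), complete_alpha_labeling e f k.
Proof.
move=> Hsym Hirr [r [sp [par [Hlob [Hr Hbal]]]]].
have Hch : forall J, exists p : seq T * seq T,
    J < r./2 -> bp_body r sp par (sp J.*2) (sp J.*2.+1) p.1 p.2.
  move=> J; case: (ltnP J r./2) => HJ; last by exists ([::], [::]) => H; lia.
  have r2 : r = r./2.*2 by have := odd_double_half r; rewrite (negbTE Hr) add0n.
  have [xs [ys H]] := Hbal J.*2 ltac:(lia) ltac:(by rewrite odd_double).
  by exists (xs, ys) => _.
pose g J := proj1_sig (constructive_indefinite_description _ (Hch J)).
have Hg : forall J, J < r./2 -> bp_body r sp par (sp J.*2) (sp J.*2.+1) (g J).1 (g J).2.
  by move=> J; exact: (proj2_sig (constructive_indefinite_description _ (Hch J))).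
exact: (main_in Hirr Hlob Hr Hg).
Qed.
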